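(* Consider the sequences $(x_k),(y_k),(\nu_k),(\lambda_k)$ generated by Algorithm 2 (described in the context). Then for all $k\ge1$, $$\|y_k-y_{k-1}\|\le\frac{1}{1-\hat\sigma}\big\|\lambda_k\big(F(y_{k-1})+\nu_{k-1}\big)+y_{k-1}-x_{k-1}\big\|.$$
   Context: Setting: $\mathcal H$ real Hilbert space; $C\subseteq\mathcal H$ nonempty closed convex; $N_C(x)=\{\nu:\langle\nu,y-x\rangle\le0\ \forall y\in C\}$ if $x\in C$, $N_C(x)=\emptyset$ otherwise. $F:C\to\mathcal H$ is monotone, continuously differentiable, and $\|F'(x)-F'(y)\|\le L\|x-y\|$ for all $x,y\in C$, with $L>0$; the set of $x$ with $0\in F(x)+N_C(x)$ is nonempty. For $y\in C$, $F_y(x):=F(y)+F'(y)(x-y)$. Parameters: $0\le\hat\sigma<1/2$; $0<\theta<(1-\hat\sigma)(1-2\hat\sigma)$; $\hat\theta:=\theta\big(\frac{\hat\sigma}{1-\hat\sigma}+\frac{\theta}{(1-\hat\sigma)^2}\big)$; $\eta>2\hat\theta/L$; $\tau:=\dfrac{2(\theta-\hat\theta)}{2\theta+\frac{\eta L}{2}+\sqrt{(2\theta+\frac{\eta L}{2})^2-4\theta(\theta-\hat\theta)}}$. Algorithm 2: input $x_0\in C$, $y_0:=x_0$, $\nu_0:=0$, $\lambda_1>0$ with $\lambda_1^2\|F(y_0)\|\le2\theta/L$. For $k=1,2,\dots$: if $F(y_{k-1})+\nu_{k-1}=0$, stop and return $y_{k-1}$. If $\frac{\lambda_kL}{2}\|\lambda_k(F(y_{k-1})+\nu_{k-1})+y_{k-1}-x_{k-1}\|\le\hat\theta$,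 set $y_k=y_{k-1}$, $\nu_k=\nu_{k-1}$; otherwise find any $(y_k,\nu_k)$ with $\nu_k\in N_C(y_k)$ and $\|\lambda_k(F_{y_{k-1}}(y_k)+\nu_k)+y_k-x_{k-1}\|\le\hat\sigma\|y_k-y_{k-1}\|$. Then, if $\lambda_k\|y_k-x_{k-1}\|\ge\eta$, set $x_k=x_{k-1}-\tau\lambda_k(F(y_k)+\nu_k)$ and $\lambda_{k+1}=(1-\tau)\lambda_k$; else set $x_k=x_{k-1}$ and $\lambda_{k+1}=\lambda_k/(1-\tau)$. Standing assumption: the algorithm never stops at the first test, i.e. $F(y_{k-1})+\nu_{k-1}\neq0$ for all $k$. *)

(* Defs.v *)
(* H is a real Hilbert space: a complete normed
   module over R : realType whose norm is induced by an inner product. *)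
From HB Require Import structures.
From mathcomp Require Import all_boot all_order all_algebra.
From mathcomp Require Import all_classical all_reals all_analysis.
Set Implicit Arguments. Unset Strict Implicit. Unset Printing Implicit Defensive.
Import Order.TTheory GRing.Theory Num.Theory.
Import numFieldNormedType.Exports.
Local Open Scope classical_set_scope.
Local Open Scope ring_scope.

Section Defs.
Context {R : realType} {H : completeNormedModType R}.

Definition is_inner_product (ip : H -> H -> R) : Prop :=
  [/\ (forall x y, ip x y = ip y x),
      (forall a x y z, ip (a *: x + y) z = a * ip x z + ip y z)
    & (forall x, ip x x = `|x| ^+ 2)].

Definition convex_set_H (C : set H) : Prop :=
  forall x y (t : R), C x -> C y -> 0 <= t -> t <= 1 ->
    C (t *: x + (1 - t) *: y).

Definition normal_cone (ip : H -> H -> R) (C : set H) (x nu : H) : Prop :=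
  C x /\ forall y, C y -> ip nu (y - x) <= 0.

Definition monotone_on (ip : H -> H -> R) (C : set H) (F : H -> H) : Prop :=
  forall x y, C x -> C y -> 0 <= ip (F x - F y) (x - y).

Definition bounded_linear (A : H -> H) : Prop :=
  [/\ (forall a u v, A (a *: u + v) = a *: A u + A v)
    & exists M : R, forall v, `|A v| <= M * `|v| ].

Definition has_derivative_on (C : set H) (F : H -> H) (F' : H -> H -> H) : Prop :=
  forall y, C y ->
    bounded_linear (F' y) /\
    forall eps : R, 0 < eps -> exists2 delta : R, 0 < delta &
      forall x, C x -> `|x - y| < delta ->
        `|F x - F y - F' y (x - y)| <= eps * `|x - y|.

Definition op_continuous_on (C : set H) (F' : H -> H -> H) : Prop :=
  forall y, C y -> forall eps : R, 0 < eps -> exists2 delta : R, 0 < delta &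
    forall x, C x -> `|x - y| < delta ->
      forall v, `|F' x v - F' y v| <= eps * `|v|.

Definition op_lipschitz_on (C : set H) (F' : H -> H -> H) (L : R) : Prop :=
  forall x y, C x -> C y ->
    forall v, `|F' x v - F' y v| <= L * `|x - y| * `|v|.

Definition lin_F (F : H -> H) (F' : H -> H -> H) (y x : H) : H :=
  F y + F' y (x - y).

End Defs.

Definition theta_hat {R : realType} (sigma theta : R) : R :=
  theta * (sigma / (1 - sigma) + theta / (1 - sigma) ^+ 2).

Definition tau_param {R : realType} (sigma theta eta L : R) : R :=
  let th := theta_hat sigma theta in
  2 * (theta - th) /
  (2 * theta + eta * L / 2 +
   Num.sqrt ((2 * theta + eta * L / 2) ^+ 2 - 4 * theta * (theta - th))).

(* Main.v *)
Require Import Defs.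
From HB Require Import structures.
From mathcomp Require Import all_boot all_order all_algebra.
From mathcomp Require Import all_classical all_reals all_analysis.
From mathcomp Require Import ring lra.
Import Order.TTheory GRing.Theory Num.Theory.
Import numFieldNormedType.Exports.
Local Open Scope classical_set_scope.
Local Open Scope ring_scope.

Section IP.
Context {R : realType} {H : completeNormedModType R} (ip : H -> H -> R).
Hypothesis hip : is_inner_product ip.

Lemma ipD x y z : ip (x + y) z = ip x z + ip y z.
Proof. case: hip => _ h _. by rewrite -[x in LHS]scale1r h mul1r. Qed.
Lemma ip0 z : ip 0 z = 0.
Proof. have := ipD 0 0 z; rewrite addr0 => h; lra. Qed.
Lemma ipZ a x z : ip (a *: x) z = a * ip x z.
Proof. case: hip => _ h _. by rewrite -[_ *: _]addr0 h ip0 addr0. Qed.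
Lemma ipN x z : ip (- x) z = - ip x z.
Proof. by rewrite -scaleN1r ipZ mulN1r. Qed.
Lemma ipB x y z : ip (x - y) z = ip x z - ip y z.
Proof. by rewrite ipD ipN. Qed.
Lemma ipC x y : ip x y = ip y x.
Proof. by case: hip. Qed.
Lemma ipxx x : ip x x = `|x| ^+ 2.
Proof. by case: hip. Qed.
Lemma ipDr x y z : ip z (x + y) = ip z x + ip z y.
Proof. by rewrite ipC ipD !(ipC z). Qed.
Lemma ipZr a x z : ip z (a *: x) = a * ip z x.
Proof. by rewrite ipC ipZ ipC. Qed.
Lemma ipNr x z : ip z (- x) = - ip z x.
Proof. by rewrite ipC ipN ipC. Qed.

Lemma ip_quad (a b : H) (t : R) : 0 < t -> 2 * ip a b <= t * `|a| ^+ 2 + `|b| ^+ 2 / t.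
Proof.
move=> t0.
have h : 0 <= ip (t *: a - b) (t *: a - b) by rewrite ipxx sqr_ge0.
rewrite ipB !ipDr !ipNr !ipZ !ipZr !ipxx (ipC b a) in h.
have -> : t * `|a| ^+ 2 + `|b| ^+ 2 / t = (t * (t * `|a| ^+ 2) + `|b| ^+ 2) / t.
  by field; rewrite gt_eqF.
rewrite ler_pdivlMr //.
lra.
Qed.

Lemma cauchy_schwarz a b : ip a b <= `|a| * `|b|.
Proof.
have [a0|an0] := eqVneq `|a| 0.
  by move/eqP: a0; rewrite normr_eq0 => /eqP ->; rewrite ip0 normr0 mul0r.
have [b0|bn0] := eqVneq `|b| 0.
  by move/eqP: b0; rewrite normr_eq0 => /eqP ->; rewrite ipC ip0 normr0 mulr0.
have ha : 0 < `|a| by rewrite lt_def an0 normr_ge0.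
have hb : 0 < `|b| by rewrite lt_def bn0 normr_ge0.
have := @ip_quad a b _ (divr_gt0 hb ha).
have -> : `|b| / `|a| * `|a| ^+ 2 + `|b| ^+ 2 / (`|b| / `|a|) = 2 * (`|a| * `|b|).
  by field; rewrite ?gt_eqF.
lra.
Qed.

Lemma lin0 (A : H -> H) : bounded_linear A -> A 0 = 0.
Proof. case=> h _. have := h 1 0 0. rewrite !scale1r addr0 => e.
move: e; set a := A 0 => e. by apply: (addrI a); rewrite addr0 -e. Qed.

Lemma linZ (A : H -> H) a v : bounded_linear A -> A (a *: v) = a *: A v.
Proof. move=> hA; have := @lin0 A hA; case: hA => h _ h0. by rewrite -[_ *: v]addr0 h h0 addr0. Qed.

Lemma deriv_mono (C : set H) F F' u w :
  convex_set_H C -> monotone_on ip C F -> has_derivative_on C F F' ->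
  C u -> C w -> 0 <= ip (F' u (w - u)) (w - u).
Proof.
move=> cvx mono hder Cu Cw.
have [hlin hd] := hder u Cu.
set d := w - u; set X := ip (F' u d) d.
apply/ler_addgt0Pr => e e0.
have nd0 : 0 <= `|d| by [].
pose eps := e / (`|d| ^+ 2 + 1).
have eps0 : 0 < eps by rewrite divr_gt0 // ltr_pwDr // sqr_ge0.
have [delta delta0 hdel] := hd eps eps0.
pose t := delta / (delta + `|d|).
have t0 : 0 < t by rewrite divr_gt0 // ltr_pwDl.
have t1 : t <= 1 by rewrite ler_pdivrMr ?mul1r ?lerDl // ltr_pwDl.
pose z := t *: w + (1 - t) *: u.
have Cz : C z by apply: cvx => //; exact: ltW.
have zu : z - u = t *: d.
  rewrite /z /d scalerBr scalerBl scale1r.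
  by rewrite addrA addrAC addrK.
have hz : `|z - u| < delta.
  rewrite zu normrZ gtr0_norm // /t mulrAC ltr_pdivrMr ?ltr_pwDl //.
  rewrite ltr_pM2l //. have := nd0; lra.
have herr := hdel z Cz hz.
set err := F z - F u - F' u (z - u) in herr.
have hFz : F z - F u = t *: F' u d + err.
  by rewrite /err zu (@linZ _ _ _ hlin) [RHS]addrC subrK.
have hm := mono z u Cz Cu.
rewrite hFz zu ipD !ipZ !ipZr in hm.
have hcs := cauchy_schwarz err d.
rewrite zu normrZ gtr0_norm // in herr.
have h1 : ip err d <= eps * (t * `|d|) * `|d|.
  apply: (le_trans hcs); rewrite ler_wpM2r //.
have h2 : 0 <= t * t * (X + eps * `|d| ^+ 2).
  have -> : t * t * (X + eps * `|d| ^+ 2) = t * (t * X) + t * (eps * (t * `|d|) * `|d|) by ring.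
  apply: (le_trans hm); rewrite lerD2l ler_wpM2l //; exact: ltW.
rewrite pmulr_rge0 in h2; last exact: mulr_gt0.
have h3 : eps * `|d| ^+ 2 <= e.
  rewrite /eps mulrAC ler_pdivrMr ?ltr_pwDr ?sqr_ge0 //. 
  have := sqr_ge0 `|d|; nra.
lra.
Qed.
Lemma vec_id (lam:R) (Fy dv nk nn yk yn xn : H) :
  lam*:(Fy + dv + nk) + yk - xn - (lam*:(Fy+nn) + yn - xn) = lam*:dv + lam*:(nk - nn) + (yk - yn).
Proof.
rewrite !scalerDr scalerN opprB addrA subrK !opprD !addrA.
rewrite -[_ - lam *: Fy]addrC !addrA addNr add0r.
by rewrite [in LHS](addrAC _ yk).
Qed.
End IP.

Lemma tau_lt1 (R : realType) (sigma theta eta L : R) :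
  0 <= sigma -> sigma < 1 / 2 -> 0 < theta -> 0 < L ->
  eta > 2 * theta_hat sigma theta / L -> tau_param sigma theta eta L < 1.
Proof.
move=> s0 s12 th0 L0 heta.
have s1 : 0 < 1 - sigma by lra.
have th_ge0 : 0 <= theta_hat sigma theta.
  rewrite /theta_hat; apply: mulr_ge0; first exact: ltW.
  by apply: addr_ge0; apply: divr_ge0 => //; try exact: ltW; exact: sqr_ge0.
have etaL : 2 * theta_hat sigma theta < eta * L by rewrite -ltr_pdivrMr.
rewrite /tau_param /=.
have s_ge0 := sqrtr_ge0 ((2 * theta + eta * L / 2) ^+ 2 - 4 * theta * (theta - theta_hat sigma theta)).
have den0 : 0 < 2 * theta + eta * L / 2 + Num.sqrt ((2 * theta + eta * L / 2) ^+ 2 - 4 * theta * (theta - theta_hat sigma theta)) by lra.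
rewrite ltr_pdivrMr // mul1r. lra.
Qed.
Theorem proposition4p1 (R : realType) (H : completeNormedModType R)
  (ip : H -> H -> R) (C : set H) (F : H -> H) (F' : H -> H -> H) (L : R)
  (sigma theta eta : R)
  (x y nu : nat -> H) (lam : nat -> R) :
  is_inner_product ip ->
  (* C nonempty closed convex *)
  C !=set0 -> closed C -> convex_set_H C ->
  (* F monotone, continuously differentiable, F' L-Lipschitz on C *)
  monotone_on ip C F ->
  has_derivative_on C F F' -> op_continuous_on C F' ->
  0 < L -> op_lipschitz_on C F' L ->
  (* the solution set is nonempty *)
  (exists z, exists nuz, normal_cone ip C z nuz /\ F z + nuz = 0) ->
  (* parameters *)
  0 <= sigma -> sigma < 1 / 2 ->
  0 < theta -> theta < (1 - sigma) * (1 - 2 * sigma) ->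
  eta > 2 * theta_hat sigma theta / L ->
  (* initialization *)
  C (x 0%N) -> y 0%N = x 0%N -> nu 0%N = 0 ->
  0 < lam 1%N -> lam 1%N ^+ 2 * `|F (y 0%N)| <= 2 * theta / L ->
  (* standing assumption: the algorithm never stops *)
  (forall k : nat, F (y k) + nu k != 0) ->
  (* iteration k = n.+1 *)
  (forall n : nat,
     let k := n.+1 in
     (if lam k * L / 2 * `|lam k *: (F (y n) + nu n) + y n - x n|
           <= theta_hat sigma theta
      then y k = y n /\ nu k = nu n
      else normal_cone ip C (y k) (nu k) /\
           `|lam k *: (lin_F F F' (y n) (y k) + nu k) + y k - x n|
             <= sigma * `|y k - y n|) /\
     (if eta <= lam k * `|y k - x n|
      then x k = x n - tau_param sigma theta eta L *: (lam k *: (F (y k) + nu k))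
           /\ lam k.+1 = (1 - tau_param sigma theta eta L) * lam k
      else x k = x n
           /\ lam k.+1 = lam k / (1 - tau_param sigma theta eta L))) ->
  forall k : nat, (1 <= k)%N ->
    `|y k - y k.-1|
      <= 1 / (1 - sigma) * `|lam k *: (F (y k.-1) + nu k.-1) + y k.-1 - x k.-1|.
Proof.
move=> hip _ _ cvx mono hder _ L0 _ _ s0 s12 th0 _ heta Cx0 y0 nu0 lam10 _ _ hstep.
have s1 : 0 < 1 - sigma by lra.
have ncone : forall n, normal_cone ip C (y n) (nu n).
  elim=> [|n IH]; first by split; [rewrite y0 | move=> z _; rewrite nu0 (ip0 ip hip)].
  have [h1 _] := hstep n; move: h1; case: ifP => _; last by case.
  by case=> -> ->.
have tau1 := @tau_lt1 R sigma theta eta L s0 s12 th0 L0 heta.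
have lam0 : forall n, 0 <= lam n.+1.
  elim=> [|n IH]; first exact: ltW.
  have [_ h2] := hstep n; move: h2; case: ifP => _ [_ ->].
    by apply: mulr_ge0 => //; lra.
  by apply: divr_ge0 => //; lra.
case=> [//|n] _ /=.
have [h1 _] := hstep n; move: h1; case: ifP => _.
  case=> -> _; rewrite subrr normr0; apply: mulr_ge0 => //.
  by apply: divr_ge0 => //; exact: ltW.
case=> ncK hr.
set d := y n.+1 - y n in hr *.
set a := lam n.+1 *: (F (y n) + nu n) + y n - x n.
set r := lam n.+1 *: (lin_F F F' (y n) (y n.+1) + nu n.+1) + y n.+1 - x n in hr.
have hra : r - a = lam n.+1 *: F' (y n) d + lam n.+1 *: (nu n.+1 - nu n) + d.
  by rewrite /r /a /lin_F -/d vec_id.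
have hF' : 0 <= ip (F' (y n) d) d.
  by apply: (deriv_mono ip hip _ _ _ (y n) (y n.+1) cvx mono hder); [exact: (ncone n).1 | exact: ncK.1].
have hnu : 0 <= ip (nu n.+1 - nu n) d.
  have h1 := ncK.2 (y n) (ncone n).1.
  have h2 := (ncone n).2 (y n.+1) ncK.1.
  rewrite -opprB (ipNr ip hip) in h1.
  rewrite (ipB ip hip); lra.
have hmain : `|d| ^+ 2 <= ip (r - a) d.
  rewrite hra (ipD ip hip) (ipD ip hip (_ *: _)) !(ipZ ip hip) (ipxx ip hip).
  have := mulr_ge0 (lam0 n) hF'; have := mulr_ge0 (lam0 n) hnu; lra.
have hcs := cauchy_schwarz ip hip (r - a) d.
have hn : `|r - a| <= `|r| + `|a| by apply: ler_normB.
have hd0 : 0 <= `|d| by [].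
have h2 : `|d| ^+ 2 <= (sigma * `|d| + `|a|) * `|d|.
  apply: (le_trans hmain); apply: (le_trans hcs); apply: ler_wpM2r => //; lra.
have h3 : (1 - sigma) * `|d| <= `|a|.
  have [dz|dpos] := eqVneq `|d| 0.
    by rewrite dz mulr0.
  have dp : 0 < `|d| by rewrite lt_def dpos.
  rewrite expr2 ler_pM2r // in h2; lra.
by rewrite mul1r mulrC ler_pdivlMr // mulrC.
Qed.
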